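(* Let $p,q\in\mathbb R$. The differential equation $$x^3R'''(x)+4x^2R''(x)+2x(1-2p^2-4qx+2x^2)R'(x)-4(p^2+qx)R(x)=0$$ admits a unique formal solution of the form $R(x)=\frac1\pi+\frac1\pi\sum_{n\ge1}\pi^n d_n x^{-n}$, and its coefficients are given by $$d_1=-\frac q\pi,\quad d_2=-\frac{p^2+q^2}{2\pi^2},\quad d_{n+2}=\frac1\pi\frac{2n+1}{n+2}q\,d_{n+1}+\frac{1}{\pi^2}\frac{n-1}{n+2}\Big(p^2-\frac{n^2}{4}\Big)d_n\quad(n\ge1).$$
   Context: This differential equation is satisfied by $R(x)=\frac1\pi\rho_{(1),\infty}(x/\pi;2,p,q)$, the rescaled bulk density at the spectrum singularity of the generalised circular Jacobi ensemble with $\beta=2$ (probability density on $(-\pi,\pi]^N$ proportional to $\prod_l e^{q\theta_l}|1+e^{i\theta_l}|^{2p}\prod_{j<k}|e^{i\theta_k}-e^{i\theta_j}|^2$, with $\rho_{(1),\infty}(x)=\lim_{N\to\infty}\frac{2\pi}{N}\rho_{(1),N}(-\pi\,\mathrm{sgn}(x)+2\pi x/N)$). The series $\sum_n d_n x^{-n}$ is the non-oscillatory part of the large-$|x|$ asymptotic expansion of $\rho_{(1),\infty}(x;2,p,q)-1$. *)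

(* Defs.v *)
From Stdlib Require Import Reals ZArith.
Open Scope R_scope.

(* A formal series in 1/x:  sum_{n in Z} a n * x^(-n), where a : Z -> R.
   (Coefficient a n multiplies x^(-n).  Series arising here have a n = 0
   for n < -3, so all operations below are purely formal, finite per
   coefficient.) *)
Definition fser := Z -> R.

(* formal derivative d/dx : a_k x^{-k} |-> -k a_k x^{-k-1} *)
Definition fD (a : fser) : fser := fun n => - IZR (n - 1) * a (n - 1)%Z.
(* multiplication by x : a_k x^{-k} |-> a_k x^{-(k-1)} *)
Definition fX (a : fser) : fser := fun n => a (n + 1)%Z.
Definition fadd (a b : fser) : fser := fun n => a n + b n.
Definition fscale (c : R) (a : fser) : fser := fun n => c * a n.

Definition ode_lhs (p q : R) (Rs : fser) : fser :=
  fadd (fX (fX (fX (fD (fD (fD Rs))))))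
  (fadd (fscale 4 (fX (fX (fD (fD Rs)))))
  (fadd (fscale 2 (fX (fadd (fscale (1 - 2 * p ^ 2) (fD Rs))
                        (fadd (fscale (- 4 * q) (fX (fD Rs)))
                              (fscale 2 (fX (fX (fD Rs))))))))
        (fscale (-4) (fadd (fscale (p ^ 2) Rs) (fscale q (fX Rs)))))).

(* The formal series R(x) = 1/pi + 1/pi * sum_{n>=1} pi^n d_n x^{-n}
   (the value d 0 is irrelevant). *)
Definition ser_of (d : nat -> R) : fser := fun n =>
  if (n <? 0)%Z then 0
  else if (n =? 0)%Z then / PI
  else / PI * PI ^ (Z.to_nat n) * d (Z.to_nat n).

Definition is_formal_solution (p q : R) (d : nat -> R) : Prop :=
  forall n : Z, ode_lhs p q (ser_of d) n = 0.

(* Main.v *)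
Require Import Defs.
From Stdlib Require Import Reals ZArith Lra Lia.
Open Scope R_scope.
Lemma ode_coef p q (a : fser) n :
  ode_lhs p q a n = IZR (n-1) * (4*p^2 - IZR n ^2) * a n + 4*q*(2*IZR n+1) * a (n+1)%Z
    - 4 * (IZR n + 2) * a (n+2)%Z.
Proof.
  unfold ode_lhs, fadd, fscale, fX, fD.
  repeat match goal with |- context [a ?e] =>
    let k := fresh in
    first [ assert (k : e = n) by lia | assert (k: e = (n+1)%Z) by lia | assert (k: e = (n+2)%Z) by lia ];
    rewrite k; clear k
  end.
  rewrite !minus_IZR, !plus_IZR. simpl. ring.
Qed.

Lemma ser_pos d k : ser_of d (Z.of_nat (S k)) = /PI*PI^(S k)*d (S k).
Proof.
  unfold ser_of. destruct (Z.ltb_spec (Z.of_nat (S k)) 0); [lia|].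
  destruct (Z.eqb_spec (Z.of_nat (S k)) 0); [lia|]. rewrite Nat2Z.id. reflexivity.
Qed.
Lemma ser_neg d n : (n < 0)%Z -> ser_of d n = 0%R.
Proof. intro. unfold ser_of. destruct (Z.ltb_spec n 0); [reflexivity|lia]. Qed.
Lemma ser_0 d : ser_of d 0%Z = /PI.
Proof. reflexivity. Qed.

Definition rec_ok p q (d : nat -> R) :=
  d 1%nat = - q / PI /\
  d 2%nat = - (p ^ 2 + q ^ 2) / (2 * PI ^ 2) /\
  (forall n : nat, (1 <= n)%nat ->
     d (n + 2)%nat =
       / PI * ((2 * INR n + 1) / (INR n + 2)) * q * d (n + 1)%nat
       + / PI ^ 2 * ((INR n - 1) / (INR n + 2)) * (p ^ 2 - INR n ^ 2 / 4) * d n).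

Lemma PIn0 : PI <> 0. Proof. generalize PI_RGT_0; lra. Qed.

Lemma eqn_pos p q d m :
  ode_lhs p q (ser_of d) (Z.of_nat (S m)) =
  PI ^ m * ((INR (S m) - 1) * (4*p^2 - INR (S m)^2) * d (S m)
   + 4*q*(2*INR (S m)+1) * PI * d (S m + 1)%nat
   - 4*(INR (S m)+2) * PI^2 * d (S m + 2)%nat).
Proof.
  rewrite ode_coef.
  replace (Z.of_nat (S m) + 1)%Z with (Z.of_nat (S (S m))) by lia.
  replace (Z.of_nat (S m) + 2)%Z with (Z.of_nat (S (S (S m)))) by lia.
  rewrite !ser_pos, minus_IZR, <- !INR_IZR_INZ.
  replace (S m + 1)%nat with (S (S m)) by lia.
  replace (S m + 2)%nat with (S (S (S m))) by lia.
  simpl pow. field. apply PIn0.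
Qed.

Lemma sol_iff p q d : is_formal_solution p q d <-> rec_ok p q d.
Proof.
  pose proof PIn0 as HP.
  split.
  - intro H. unfold is_formal_solution in H.
    assert (H1 := H (-1)%Z). assert (H0 := H 0%Z).
    rewrite ode_coef in H1, H0.
    rewrite (ser_neg d (-1)) in H1 by lia.
    assert (S1 : ser_of d 1%Z = d 1%nat) by (unfold ser_of; simpl; vm_compute (PosDef.Pos.to_nat _); field; exact HP).
    assert (S2 : ser_of d 2%Z = PI * d 2%nat) by (unfold ser_of; simpl; vm_compute (PosDef.Pos.to_nat _); field; exact HP).
    simpl (-1+1)%Z in H1. simpl (-1+2)%Z in H1. simpl (0+1)%Z in H0. simpl (0+2)%Z in H0.
    rewrite S1, ser_0 in H1. rewrite S1, S2, ser_0 in H0.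
    simpl IZR in H1, H0.
    assert (Hd1 : d 1%nat = - q / PI).
    { unfold Rdiv. lra. }
    split; [exact Hd1|]. split.
    + rewrite Hd1 in H0.
      apply Rmult_eq_reg_l with (8*PI); [|generalize PI_RGT_0; lra].
      replace (8 * PI * (- (p ^ 2 + q ^ 2) / (2 * PI ^ 2))) with (-4*p^2*/PI-4*q^2*/PI) by (field; exact HP).
      replace (- q / PI) with (-q */PI) in H0 by reflexivity. lra.
    + intros n Hn. destruct n as [|m]; [lia|].
      assert (E := H (Z.of_nat (S m))). rewrite eqn_pos in E.
      apply Rmult_integral in E. destruct E as [E|E].
      { exfalso. apply (pow_nonzero PI m HP E). }
      assert (Hpos : 0 < INR (S m) + 2) by (pose proof (pos_INR (S m)); lra).
      apply Rminus_diag_uniq.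
      assert (K : (d (S m + 2)%nat - (/ PI * ((2 * INR (S m) + 1) / (INR (S m) + 2)) * q * d (S m + 1)%nat
        + / PI ^ 2 * ((INR (S m) - 1) / (INR (S m) + 2)) * (p ^ 2 - INR (S m) ^ 2 / 4) * d (S m)))
        * (4*(INR (S m)+2) * PI^2) = -
        ((INR (S m) - 1) * (4*p^2 - INR (S m)^2) * d (S m)
   + 4*q*(2*INR (S m)+1) * PI * d (S m + 1)%nat
   - 4*(INR (S m)+2) * PI^2 * d (S m + 2)%nat)).
      { field; split; first [exact HP | lra]. }
      rewrite E, Ropp_0 in K. apply Rmult_integral in K. destruct K as [K|K]; [exact K|].
      exfalso. assert (0 < PI^2) by (apply pow_lt, PI_RGT_0). nra.
  - intros [Hd1 [Hd2 Hr]] n. rewrite ode_coef.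
    destruct (Z.lt_trichotomy n (-2)) as [Hl|[He|Hg]].
    + rewrite !ser_neg by lia. ring.
    + subst n. simpl. rewrite !ser_neg by lia. ring.
    + destruct (Z.eq_dec n (-1)) as [->|Hn1].
      { simpl. rewrite ser_neg by lia. change 1%Z with (Z.of_nat (S 0)).
        rewrite ser_pos, ser_0. change (S 0) with 1%nat. rewrite Hd1. simpl. field. exact HP. }
      destruct (Z.eq_dec n 0) as [->|Hn0].
      { simpl. change 1%Z with (Z.of_nat (S 0)). change 2%Z with (Z.of_nat (S 1)).
        rewrite !ser_pos, ser_0. change (S 0) with 1%nat. change (S 1) with 2%nat.
        rewrite Hd1, Hd2. simpl. field. exact HP. }
      destruct (Z.to_nat n) as [|m] eqn:En; [lia|].
      replace n with (Z.of_nat (S m)) by lia.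
      rewrite <- ode_coef, eqn_pos. rewrite (Hr (S m)) by lia.
      assert (Hpos : 0 < INR (S m) + 2) by (pose proof (pos_INR (S m)); lra).
      field; split; first [exact HP | lra].
Qed.

Definition step p q (n:nat) (x y : R) :=
  / PI * ((2 * INR n + 1) / (INR n + 2)) * q * y
  + / PI ^ 2 * ((INR n - 1) / (INR n + 2)) * (p ^ 2 - INR n ^ 2 / 4) * x.
Fixpoint pr p q (k:nat) : R*R := match k with
  | O => (-q/PI, -(p^2+q^2)/(2*PI^2))
  | S k => (snd (pr p q k), step p q (S k) (fst (pr p q k)) (snd (pr p q k))) end.
Definition dsol p q (k:nat) := match k with O => 0 | S k => fst (pr p q k) end.

Lemma dsol_ok p q : rec_ok p q (dsol p q).
Proof.
  split; [reflexivity|]. split; [reflexivity|].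
  intros n Hn. destruct n as [|m]; [lia|].
  replace (S m + 2)%nat with (S (S (S m))) by lia.
  replace (S m + 1)%nat with (S (S m)) by lia.
  simpl dsol. simpl pr at 1. simpl fst. unfold step. ring.
Qed.

Theorem proposition2p10 (p q : R) :
  (exists d : nat -> R, is_formal_solution p q d) /\
  (forall d d' : nat -> R, is_formal_solution p q d -> is_formal_solution p q d' ->
     forall n : nat, (1 <= n)%nat -> d n = d' n) /\
  (forall d : nat -> R, is_formal_solution p q d ->
     d 1%nat = - q / PI /\
     d 2%nat = - (p ^ 2 + q ^ 2) / (2 * PI ^ 2) /\
     (forall n : nat, (1 <= n)%nat ->
        d (n + 2)%nat =
          / PI * ((2 * INR n + 1) / (INR n + 2)) * q * d (n + 1)%nat
          + / PI ^ 2 * ((INR n - 1) / (INR n + 2)) * (p ^ 2 - INR n ^ 2 / 4) * d n)).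
Proof.
  split; [exists (dsol p q); apply sol_iff, dsol_ok|].
  split; [|intros d Hd; apply sol_iff; exact Hd].
  intros d d' Hd Hd'. apply sol_iff in Hd, Hd'.
  destruct Hd as [a1 [a2 ar]], Hd' as [b1 [b2 br]].
  assert (K : forall n, d (S n) = d' (S n) /\ d (S (S n)) = d' (S (S n))).
  { induction n as [|n [IH1 IH2]].
    - split; [rewrite a1, b1|rewrite a2, b2]; reflexivity.
    - split; [exact IH2|].
      replace (S (S (S n))) with (S n + 2)%nat by lia.
      rewrite (ar (S n)), (br (S n)) by lia.
      replace (S n + 1)%nat with (S (S n)) by lia. rewrite IH1, IH2. reflexivity. }
  intros n Hn. destruct n as [|n]; [lia|]. apply K.
Qed.
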